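(* Under the assumption $N_s,N_r\ge 2K+1$, let $\mathbf L_K$ denote the operator $\mathbf L$ of truncation order $K$. Then there is a constant $C>0$ independent of $K$ (depending on $k_0R$) such that $$\mathrm{cond}(\mathbf L_K)=\frac{\max_{|n|\le K}|d_n|}{\min_{|n|\le K}|d_n|}\le C\,(C_RK)^K\quad\text{for all sufficiently large }K,$$ where $C_R=2/(ek_0R)$.
   Context: Let $k_0>0$, $R>0$, $z_0\in\mathbb R^2$, $K\in\mathbb N$, $N_s,N_r\in\mathbb N$. Let $\theta_s=2\pi s/N_s$, $\xi_s=(\cos\theta_s,\sin\theta_s)$, $\theta_r=2\pi r/N_r$. Define $\mathbf A=(A_{sm})\in\mathbb C^{N_s\times(2K+1)}$, $\mathbf B=(B_{rn})\in\mathbb C^{N_r\times(2K+1)}$, $m,n=-K,\dots,K$, by $A_{sm}=e^{ik_0\xi_s\cdot z_0}e^{im(\pi/2-\theta_s)}$, $B_{rn}=\frac i4\overline{H_n^{(1)}(k_0R)}e^{-in\theta_r}$, with $H_n^{(1)}$ the Hankel function of the first kind, and $d_n=\frac i4H_n^{(1)}(k_0R)$. The operator $\mathbf L:\mathbb C^{(2K+1)\times(2K+1)}\to\mathbb C^{N_s\times N_r}$ is $\mathbf L(\mathbf X)=\mathbf A\mathbf X\mathbf B^H$ (Frobenius norms), and $\mathrm{cond}$ denotes the ratio of its largest to smallest singular value. *)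

(* Defs.v *)
From Stdlib Require Import Reals Lra ZArith ClassicalEpsilon.
Open Scope R_scope.

Definition Cx : Type := (R * R)%type.
Definition Cadd (a b : Cx) : Cx := (fst a + fst b, snd a + snd b).
Definition Cmul (a b : Cx) : Cx :=
  (fst a * fst b - snd a * snd b, fst a * snd b + snd a * fst b).
Definition Cconj (a : Cx) : Cx := (fst a, - snd a).
Definition Cmod2 (a : Cx) : R := fst a ^ 2 + snd a ^ 2.
Definition Cmod (a : Cx) : R := sqrt (Cmod2 a).
Definition Cexpi (t : R) : Cx := (cos t, sin t).
Definition Cscal (r : R) (a : Cx) : Cx := (r * fst a, r * snd a).

Fixpoint rsum (n : nat) (f : nat -> R) : R :=
  match n with O => 0 | S k => rsum k f + f k end.
Fixpoint csum (n : nat) (f : nat -> Cx) : Cx :=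
  match n with O => (0, 0) | S k => Cadd (csum k f) (f k) end.
Fixpoint rmax_upto (n : nat) (f : nat -> R) : R :=
  match n with O => f O | S k => Rmax (rmax_upto k f) (f (S k)) end.
Fixpoint rmin_upto (n : nat) (f : nat -> R) : R :=
  match n with O => f O | S k => Rmin (rmin_upto k f) (f (S k)) end.

Definition series_value (a : nat -> R) : R :=
  epsilon (inhabits 0) (fun l => Un_cv (fun N => sum_f_R0 a N) l).

(** Euler–Mascheroni constant and psi(m+1) = H_m - gamma. *)
Definition harmonic (m : nat) : R := rsum m (fun k => / INR (S k)).
Definition euler_gamma : R :=
  epsilon (inhabits 0) (fun g => Un_cv (fun n => harmonic n - ln (INR n)) g).
Definition psi1 (m : nat) : R := harmonic m - euler_gamma.

(** Bessel functions of integer order n >= 0 (DLMF 10.2.2, 10.8.1), x > 0. *)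
Definition BesselJ (n : nat) (x : R) : R :=
  series_value (fun k => (-1) ^ k / (INR (fact k) * INR (fact (n + k)))
                          * (x / 2) ^ (2 * k + n)).
Definition BesselY (n : nat) (x : R) : R :=
  - (/ PI) * / ((x / 2) ^ n)
      * rsum n (fun k => INR (fact (n - k - 1)) / INR (fact k) * (x ^ 2 / 4) ^ k)
  + (2 / PI) * ln (x / 2) * BesselJ n x
  - ((x / 2) ^ n / PI)
      * series_value (fun k => (psi1 k + psi1 (n + k)) * (- (x ^ 2 / 4)) ^ k
                               / (INR (fact k) * INR (fact (n + k)))).

(** Hankel function of the first kind, integer order n, H_{-n} = (-1)^n H_n. *)
Definition Hankel1 (n : Z) (x : R) : Cx :=
  let m := Z.abs_nat n in
  let h : Cx := (BesselJ m x, BesselY m x) in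
  if (n <? 0)%Z then Cscal ((-1) ^ m) h else h.

Definition dcoef (k0 R0 : R) (n : Z) : Cx := Cmul (0, / 4) (Hankel1 n (k0 * R0)).

(** index j in 0..2K  <->  n = j - K in -K..K *)
Definition idx (K j : nat) : Z := (Z.of_nat j - Z.of_nat K)%Z.

Definition theta (N s : nat) : R := 2 * PI * INR s / INR N.

(** A_{sm} and B_{rn}; s in 0..N_s-1, r in 0..N_r-1. *)
Definition Aent (k0 : R) (z0 : R * R) (Ns s : nat) (m : Z) : Cx :=
  let th := theta Ns s in
  Cmul (Cexpi (k0 * (cos th * fst z0 + sin th * snd z0)))
       (Cexpi (IZR m * (PI / 2 - th))).
Definition Bent (k0 R0 : R) (Nr r : nat) (n : Z) : Cx :=
  Cmul (Cmul (0, / 4) (Cconj (Hankel1 n (k0 * R0))))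
       (Cexpi (- (IZR n * theta Nr r))).

(** Matrices X = (X_{mn}), m,n = -K..K, as functions Z -> Z -> C. *)
Definition Frob2 (K : nat) (X : Z -> Z -> Cx) : R :=
  rsum (2 * K + 1) (fun i => rsum (2 * K + 1) (fun j => Cmod2 (X (idx K i) (idx K j)))).

(** L(X) = A X B^H, entry (s, r). *)
Definition Lop (k0 R0 : R) (z0 : R * R) (K Ns Nr : nat) (X : Z -> Z -> Cx)
  (s r : nat) : Cx :=
  csum (2 * K + 1) (fun i => csum (2 * K + 1) (fun j =>
    Cmul (Cmul (Aent k0 z0 Ns s (idx K i)) (X (idx K i) (idx K j)))
         (Cconj (Bent k0 R0 Nr r (idx K j))))).

Definition LFrob2 (k0 R0 : R) (z0 : R * R) (K Ns Nr : nat) (X : Z -> Z -> Cx) : R :=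
  rsum Ns (fun s => rsum Nr (fun r => Cmod2 (Lop k0 R0 z0 K Ns Nr X s r))).

Definition quot_set (k0 R0 : R) (z0 : R * R) (K Ns Nr : nat) (v : R) : Prop :=
  exists X : Z -> Z -> Cx, Frob2 K X <> 0 /\
    v = sqrt (LFrob2 k0 R0 z0 K Ns Nr X) / sqrt (Frob2 K X).

Definition is_glb (E : R -> Prop) (m : R) : Prop :=
  (forall x, E x -> m <= x) /\ (forall b, (forall x, E x -> b <= x) -> b <= m).

(** Largest / smallest singular value of L (domain dimension (2K+1)^2 <= Ns*Nr),
    as max / min of ||L X|| / ||X||. *)
Definition sigma_max (k0 R0 : R) (z0 : R * R) (K Ns Nr : nat) : R :=
  epsilon (inhabits 0) (is_lub (quot_set k0 R0 z0 K Ns Nr)).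
Definition sigma_min (k0 R0 : R) (z0 : R * R) (K Ns Nr : nat) : R :=
  epsilon (inhabits 0) (is_glb (quot_set k0 R0 z0 K Ns Nr)).
Definition condL (k0 R0 : R) (z0 : R * R) (K Ns Nr : nat) : R :=
  sigma_max k0 R0 z0 K Ns Nr / sigma_min k0 R0 z0 K Ns Nr.

Definition dmax (k0 R0 : R) (K : nat) : R :=
  rmax_upto (2 * K) (fun j => Cmod (dcoef k0 R0 (idx K j))).
Definition dmin (k0 R0 : R) (K : nat) : R :=
  rmin_upto (2 * K) (fun j => Cmod (dcoef k0 R0 (idx K j))).

Definition C_R (k0 R0 : R) : R := 2 / (exp 1 * k0 * R0).

(* Main.v *)
Require Import Defs.
From Stdlib Require Import Reals ZArith.
From Stdlib Require Import Lra Lia Psatz ClassicalEpsilon Classical Bool.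
Open Scope R_scope.

Lemma rsum_ext : forall n f g, (forall i, (i < n)%nat -> f i = g i) -> rsum n f = rsum n g.
Proof. induction n; intros f g H; simpl; auto. rewrite (IHn f g) by (intros; apply H; lia). rewrite H by lia. auto. Qed.

Lemma rsum_scal : forall n c f, rsum n (fun i => c * f i) = c * rsum n f.
Proof. induction n; intros; simpl. ring. rewrite IHn. ring. Qed.

Lemma rsum_add : forall n f g, rsum n (fun i => f i + g i) = rsum n f + rsum n g.
Proof. induction n; intros; simpl. ring. rewrite IHn. ring. Qed.

Lemma rsum_opp : forall n f, rsum n (fun i => - f i) = - rsum n f.
Proof. induction n; intros; simpl. ring. rewrite IHn. ring. Qed.

Lemma rsum_zero : forall n f, (forall i, (i<n)%nat -> f i = 0) -> rsum n f = 0.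
Proof. intros. rewrite (rsum_ext n f (fun _ => 0)) by auto. clear. induction n; simpl; lra. Qed.

Lemma rsum_tele : forall n g, rsum n (fun r => g (S r) - g r) = g n - g O.
Proof. induction n; intros; simpl. ring. rewrite IHn. ring. Qed.

Lemma rsum_swap : forall n m f, rsum n (fun i => rsum m (fun j => f i j)) = rsum m (fun j => rsum n (fun i => f i j)).
Proof. induction n; intros; simpl. symmetry; apply rsum_zero; auto.
  rewrite IHn. rewrite <- rsum_add. auto. Qed.

Lemma rsum_nonneg : forall n f, (forall i, (i<n)%nat -> 0 <= f i) -> 0 <= rsum n f.
Proof. induction n; intros; simpl. lra. assert (0 <= f n) by (apply H; lia).
  assert (0 <= rsum n f) by (apply IHn; intros; apply H; lia). lra. Qed.

Lemma rsum_le : forall n f g, (forall i, (i<n)%nat -> f i <= g i) -> rsum n f <= rsum n g.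
Proof. induction n; intros; simpl. lra. assert (f n <= g n) by (apply H; lia).
  assert (rsum n f <= rsum n g) by (apply IHn; intros; apply H; lia). lra. Qed.

Lemma rsum_single : forall n f j, (j < n)%nat -> (forall i, (i<n)%nat -> i <> j -> f i = 0) -> rsum n f = f j.
Proof. induction n; intros f j Hj H. lia. simpl. destruct (Nat.eq_dec j n).
  - subst. rewrite rsum_zero. ring. intros; apply H; lia.
  - rewrite (IHn f j) by (try lia; intros; apply H; lia). rewrite (H n) by lia. ring. Qed.

Lemma rsum_term_le : forall n f j, (j < n)%nat -> (forall i, (i<n)%nat -> 0 <= f i) -> f j <= rsum n f.
Proof. induction n; intros f j Hj H. lia. simpl. destruct (Nat.eq_dec j n).
  - subst. assert (0 <= rsum n f) by (apply rsum_nonneg; intros; apply H; lia). lra.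
  - assert (f j <= rsum n f) by (apply IHn; try lia; intros; apply H; lia).
    assert (0 <= f n) by (apply H; lia). lra. Qed.

Lemma sin_2PIm : forall m:Z, sin (2*PI*IZR m) = 0.
Proof. intros. apply sin_eq_0_1. exists (2*m)%Z. rewrite mult_IZR. simpl. ring. Qed.
Lemma cos_2PIm : forall m:Z, cos (2*PI*IZR m) = 1.
Proof. intros. replace (2*PI*IZR m) with (2*(PI*IZR m)) by ring. rewrite cos_2a_sin.
  rewrite sin_eq_0_1. ring. exists m. ring. Qed.

Lemma trig_sums : forall (N:nat) (m:Z), (0 < Z.abs m < Z.of_nat N)%Z ->
  rsum N (fun r => cos (IZR m * theta N r)) = 0 /\ rsum N (fun r => sin (IZR m * theta N r)) = 0.
Proof.
  intros N m Hm.
  assert (HN : 0 < INR N). { apply lt_0_INR. lia. }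
  set (a := 2*PI*IZR m / INR N).
  assert (Ha : forall r, IZR m * theta N r = a * INR r).
  { intros. unfold theta, a. field. lra. }
  assert (HaN : a * INR N = 2*PI*IZR m). { unfold a. field. lra. }
  assert (Hs : sin (a/2) <> 0).
  { assert (Habs : IZR (Z.abs m) < INR N). { rewrite INR_IZR_INZ. apply IZR_lt. lia. }
    assert (H0 : 0 < IZR (Z.abs m)) by (apply IZR_lt; lia).
    rewrite abs_IZR in Habs, H0. pose proof PI_RGT_0.
    assert (a/2 = PI * IZR m / INR N) by (unfold a; field; lra).
    rewrite H1. destruct (Rle_dec 0 (IZR m)).
    - rewrite Rabs_right in Habs by lra. apply Rgt_not_eq. apply sin_gt_0.
      + apply Rdiv_lt_0_compat; try lra. apply Rmult_lt_0_compat; try lra. rewrite Rabs_right in H0; lra.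
      + apply Rmult_lt_reg_r with (INR N); auto. field_simplify; try lra. apply Rmult_lt_compat_l; lra.
    - rewrite Rabs_left in Habs by lra. apply Rlt_not_eq. apply sin_lt_0_var.
      + apply Rmult_lt_reg_r with (INR N); auto. field_simplify; try lra. nra.
      + assert (PI * IZR m < 0) by nra. apply Rmult_lt_reg_r with (INR N); auto. field_simplify; lra. }
  split.
  - apply Rmult_eq_reg_l with (2*sin(a/2)); [|lra].
    rewrite <- rsum_scal. rewrite Rmult_0_r.
    rewrite (rsum_ext N _ (fun r => (fun r => sin (a*INR r - a/2)) (S r) - (fun r => sin (a*INR r - a/2)) r)).
    + rewrite (rsum_tele N (fun r => sin (a*INR r - a/2))). simpl. rewrite HaN. rewrite sin_minus, sin_2PIm, cos_2PIm.
      replace (a*0 - a/2) with (-(a/2)) by ring. rewrite sin_neg. ring.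
    + intros. cbv beta.  rewrite Ha, S_INR. replace (a * (INR i + 1) - a/2) with (a*INR i + a/2) by (clearbody a; field).
      rewrite sin_plus, sin_minus. ring.
  - apply Rmult_eq_reg_l with (2*sin(a/2)); [|lra].
    rewrite <- rsum_scal. rewrite Rmult_0_r.
    rewrite (rsum_ext N _ (fun r => - ((fun r => cos (a*INR r - a/2)) (S r) - (fun r => cos (a*INR r - a/2)) r))).
    + rewrite rsum_opp, (rsum_tele N (fun r => cos (a*INR r - a/2))). simpl. rewrite HaN. rewrite cos_minus, sin_2PIm, cos_2PIm.
      replace (a*0 - a/2) with (-(a/2)) by ring. rewrite cos_neg. ring.
    + intros. cbv beta. rewrite Ha, S_INR. replace (a * (INR i + 1) - a/2) with (a*INR i + a/2) by (clearbody a; field).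
      rewrite cos_plus, cos_minus. ring.
Qed.

Lemma csum_fst : forall n f, fst (csum n f) = rsum n (fun i => fst (f i)).
Proof. induction n; intros; simpl; auto. rewrite IHn. auto. Qed.
Lemma csum_snd : forall n f, snd (csum n f) = rsum n (fun i => snd (f i)).
Proof. induction n; intros; simpl; auto. rewrite IHn. auto. Qed.

Lemma rsum_mul : forall n m f g, rsum n f * rsum m g = rsum n (fun j => rsum m (fun k => f j * g k)).
Proof. induction n; intros; simpl. ring. rewrite <- IHn. rewrite rsum_scal. ring. Qed.

Lemma rsum_lin : forall N a b f g, rsum N (fun r => a * f r - b * g r) = a * rsum N f - b * rsum N g.
Proof. induction N; intros; simpl. ring. rewrite IHN. ring. Qed.

Lemma parseval : forall N n (p : nat -> Z) (c : nat -> Cx),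
 (forall j k, (j<n)%nat -> (k<n)%nat -> j<>k -> (0 < Z.abs (p j - p k) < Z.of_nat N)%Z) ->
 rsum N (fun r => Cmod2 (csum n (fun j => Cmul (c j) (Cexpi (IZR (p j) * theta N r))))) =
 INR N * rsum n (fun j => Cmod2 (c j)).
Proof.
  intros N n p c Hp.
  set (P := fun j k => fst (c j) * fst (c k) + snd (c j) * snd (c k)).
  set (Q := fun j k => snd (c j) * fst (c k) - fst (c j) * snd (c k)).
  transitivity (rsum N (fun r => rsum n (fun j => rsum n (fun k =>
     P j k * cos (IZR (p j - p k) * theta N r) - Q j k * sin (IZR (p j - p k) * theta N r))))).
  { apply rsum_ext. intros r _. unfold Cmod2. rewrite csum_fst, csum_snd.
    assert (Hsq: forall x:R, x^2 = x*x) by (intros; ring). rewrite !Hsq.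
    rewrite !rsum_mul, <- rsum_add. apply rsum_ext; intros j _.
    rewrite <- rsum_add. apply rsum_ext; intros k _.
    unfold P, Q, Cmul, Cexpi; simpl. rewrite minus_IZR.
    replace ((IZR (p j) - IZR (p k)) * theta N r) with (IZR (p j) * theta N r - IZR (p k) * theta N r) by ring.
    rewrite cos_minus, sin_minus. ring. }
  rewrite rsum_swap. rewrite <- rsum_scal. apply rsum_ext; intros j Hj.
  rewrite rsum_swap. rewrite (rsum_single n _ j Hj).
  - rewrite rsum_lin, Z.sub_diag.
    rewrite (rsum_ext N (fun r => cos (IZR 0 * theta N r)) (fun _ => 1)).
    rewrite (rsum_ext N (fun r => sin (IZR 0 * theta N r)) (fun _ => 0)).
    + rewrite (rsum_zero N (fun _ => 0)) by auto. assert (forall M, rsum M (fun _ => 1) = INR M).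
      { induction M; simpl; auto. rewrite IHM. destruct M; simpl; ring. }
      rewrite H. unfold P, Cmod2. ring.
    + intros. rewrite Rmult_0_l, sin_0. auto.
    + intros. rewrite Rmult_0_l, cos_0. auto.
  - intros k Hk Hkj. rewrite rsum_lin.
    destruct (trig_sums N (p j - p k)) as [H1 H2]. apply Hp; auto.
    rewrite H1, H2. ring.
Qed.

Lemma csum_ext : forall n f g, (forall i, (i < n)%nat -> f i = g i) -> csum n f = csum n g.
Proof. induction n; intros f g H; simpl; auto. rewrite (IHn f g) by (intros; apply H; lia). rewrite H by lia. auto. Qed.

Lemma Cmul_csum_l : forall n a f, Cmul a (csum n f) = csum n (fun i => Cmul a (f i)).
Proof. induction n; intros; simpl. unfold Cmul; simpl; f_equal; ring.
  rewrite <- IHn. destruct a, (csum n f), (f n). unfold Cmul, Cadd; simpl; f_equal; ring. Qed.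
Lemma Cmul_csum_r : forall n a f, Cmul (csum n f) a = csum n (fun i => Cmul (f i) a).
Proof. induction n; intros; simpl. unfold Cmul; simpl; f_equal; ring.
  rewrite <- IHn. destruct a, (csum n f), (f n). unfold Cmul, Cadd; simpl; f_equal; ring. Qed.
Lemma csum_add : forall n f g, csum n (fun i => Cadd (f i) (g i)) = Cadd (csum n f) (csum n g).
Proof. induction n; intros; simpl. unfold Cadd; simpl; f_equal; ring.
  rewrite IHn. destruct (csum n f), (csum n g), (f n), (g n). unfold Cadd; simpl; f_equal; ring. Qed.
Lemma csum_zero : forall n, csum n (fun _ => (0,0)) = (0,0).
Proof. induction n; simpl; auto. rewrite IHn. unfold Cadd; simpl; f_equal; ring. Qed.
Lemma csum_swap : forall n m f, csum n (fun i => csum m (fun j => f i j)) = csum m (fun j => csum n (fun i => f i j)).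
Proof. induction n; intros; simpl. symmetry; apply csum_zero.
  rewrite IHn. rewrite <- csum_add. auto. Qed.

Lemma Cmod2_mul : forall a b, Cmod2 (Cmul a b) = Cmod2 a * Cmod2 b.
Proof. intros [a1 a2] [b1 b2]. unfold Cmod2, Cmul; simpl. ring. Qed.
Lemma Cmod2_expi : forall t, Cmod2 (Cexpi t) = 1.
Proof. intros. unfold Cmod2, Cexpi; simpl. pose proof (sin2_cos2 t). unfold Rsqr in H. lra. Qed.
Lemma Cexpi_add : forall a b, Cexpi (a + b) = Cmul (Cexpi a) (Cexpi b).
Proof. intros. unfold Cexpi, Cmul; simpl. rewrite cos_plus, sin_plus. f_equal; ring. Qed.
Lemma Cconj_mul : forall a b, Cconj (Cmul a b) = Cmul (Cconj a) (Cconj b).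
Proof. intros [a1 a2] [b1 b2]. unfold Cconj, Cmul; simpl. f_equal; ring. Qed.
Lemma Cconj_expi : forall t, Cconj (Cexpi t) = Cexpi (- t).
Proof. intros. unfold Cconj, Cexpi; simpl. rewrite cos_neg, sin_neg. auto. Qed.

Lemma rearr : forall a b c d e f : Cx,
  Cmul (Cmul (Cmul a (Cmul b c)) d) (Cmul e f) = Cmul a (Cmul (Cmul (Cmul (Cmul b d) e) c) f).
Proof. intros [a1 a2] [b1 b2] [c1 c2] [d1 d2] [e1 e2] [f1 f2]. unfold Cmul; simpl. f_equal; ring. Qed.

Definition beta (k0 RR : R) (n : Z) : Cx := Cconj (Cmul (0, / 4) (Cconj (Hankel1 n (k0 * RR)))).

Lemma Lop_form : forall k0 RR z0 K Ns Nr X s r,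
  Lop k0 RR z0 K Ns Nr X s r =
  Cmul (Cexpi (k0 * (cos (theta Ns s) * fst z0 + sin (theta Ns s) * snd z0)))
   (csum (2*K+1) (fun j => Cmul (csum (2*K+1) (fun i =>
       Cmul (Cmul (Cmul (Cexpi (IZR (idx K i) * (PI/2))) (X (idx K i) (idx K j))) (beta k0 RR (idx K j)))
            (Cexpi (IZR (- idx K i) * theta Ns s))))
     (Cexpi (IZR (idx K j) * theta Nr r)))).
Proof.
  intros. unfold Lop. rewrite Cmul_csum_l. rewrite csum_swap. apply csum_ext; intros j _.
  rewrite Cmul_csum_r, Cmul_csum_l. apply csum_ext; intros i _.
  unfold Aent, Bent, beta.
  replace (IZR (idx K i) * (PI / 2 - theta Ns s)) with (IZR (idx K i) * (PI/2) + IZR (- idx K i) * theta Ns s)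
    by (rewrite opp_IZR; ring).
  rewrite Cexpi_add. rewrite Cconj_mul, Cconj_expi, Ropp_involutive.
  apply rearr.
Qed.

Lemma LFrob2_eq : forall k0 RR z0 K Ns Nr X, (2*K+1 <= Ns)%nat -> (2*K+1 <= Nr)%nat ->
  LFrob2 k0 RR z0 K Ns Nr X = INR Ns * INR Nr *
    rsum (2*K+1) (fun i => rsum (2*K+1) (fun j =>
      Cmod2 (X (idx K i) (idx K j)) * Cmod2 (dcoef k0 RR (idx K j)))).
Proof.
  intros k0 RR z0 K Ns Nr X HNs HNr. unfold LFrob2.
  transitivity (rsum Ns (fun s => INR Nr * rsum (2*K+1) (fun j => Cmod2 (csum (2*K+1) (fun i =>
       Cmul (Cmul (Cmul (Cexpi (IZR (idx K i) * (PI/2))) (X (idx K i) (idx K j))) (beta k0 RR (idx K j)))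
            (Cexpi (IZR (- idx K i) * theta Ns s))))))).
  { apply rsum_ext; intros s _.
    set (C := fun j => csum (2*K+1) (fun i =>
       Cmul (Cmul (Cmul (Cexpi (IZR (idx K i) * (PI/2))) (X (idx K i) (idx K j))) (beta k0 RR (idx K j)))
            (Cexpi (IZR (- idx K i) * theta Ns s)))).
    transitivity (rsum Nr (fun r => Cmod2 (csum (2*K+1) (fun j => Cmul (C j) (Cexpi (IZR (idx K j) * theta Nr r)))))).
    - apply rsum_ext; intros r _. rewrite Lop_form, Cmod2_mul, Cmod2_expi. unfold C. ring.
    - rewrite parseval. unfold C. reflexivity.
      intros j k Hj Hk Hjk. unfold idx. lia. }
  rewrite rsum_scal, rsum_swap.
  rewrite (rsum_ext (2*K+1) _ (fun j => INR Ns * rsum (2*K+1) (fun i =>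
      Cmod2 (X (idx K i) (idx K j)) * Cmod2 (dcoef k0 RR (idx K j))))).
  - rewrite rsum_scal, (rsum_swap (2*K+1) (2*K+1)). ring.
  - intros j _. rewrite (parseval Ns (2*K+1) (fun i => (- idx K i)%Z)).
    + f_equal. apply rsum_ext; intros i _. rewrite !Cmod2_mul, Cmod2_expi.
      unfold beta, dcoef. destruct (Hankel1 (idx K j) (k0 * RR)) as [h1 h2].
      unfold Cmod2, Cconj, Cmul; simpl. ring.
    + intros i k Hi Hk Hik. unfold idx. lia.
Qed.

Lemma rmax_ge : forall n f j, (j <= n)%nat -> f j <= rmax_upto n f.
Proof. induction n; intros f j Hj; simpl.
  - replace j with O by lia. lra.
  - destruct (Nat.eq_dec j (S n)). subst. apply Rmax_r.
    eapply Rle_trans. apply IHn. lia. apply Rmax_l. Qed.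
Lemma rmax_att : forall n f, exists j, (j <= n)%nat /\ rmax_upto n f = f j.
Proof. induction n; intros f; simpl. exists O; auto.
  destruct (IHn f) as [j [Hj E]]. unfold Rmax. destruct (Rle_dec (rmax_upto n f) (f (S n))).
  exists (S n); auto. exists j; split; auto. Qed.
Lemma rmin_le : forall n f j, (j <= n)%nat -> rmin_upto n f <= f j.
Proof. induction n; intros f j Hj; simpl.
  - replace j with O by lia. lra.
  - destruct (Nat.eq_dec j (S n)). subst. apply Rmin_r.
    eapply Rle_trans. apply Rmin_l. apply IHn. lia. Qed.
Lemma rmin_att : forall n f, exists j, (j <= n)%nat /\ rmin_upto n f = f j.
Proof. induction n; intros f; simpl. exists O; auto.
  destruct (IHn f) as [j [Hj E]]. unfold Rmin. destruct (Rle_dec (rmin_upto n f) (f (S n))).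
  exists j; split; auto. exists (S n); auto. Qed.

Definition dj (k0 RR : R) (K j : nat) : R := Cmod (dcoef k0 RR (idx K j)).

Lemma Cmod_nonneg : forall a, 0 <= Cmod a.
Proof. intros. apply sqrt_pos. Qed.
Lemma Cmod2_nonneg : forall a, 0 <= Cmod2 a.
Proof. intros [a b]. unfold Cmod2; simpl. nra. Qed.
Lemma Cmod2_sq : forall a, Cmod2 a = Cmod a * Cmod a.
Proof. intros. unfold Cmod. rewrite sqrt_sqrt; auto. apply Cmod2_nonneg. Qed.

Lemma dmin_nonneg : forall k0 RR K, 0 <= dmin k0 RR K.
Proof. intros. unfold dmin. destruct (rmin_att (2*K) (fun j => Cmod (dcoef k0 RR (idx K j)))) as [j [_ E]].
  rewrite E. apply Cmod_nonneg. Qed.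

Definition Xdelta (K j : nat) : Z -> Z -> Cx :=
  fun a b => if (Z.eqb a 0 && Z.eqb b (idx K j))%bool then (1,0) else (0,0).

Lemma Xdelta_frob : forall K j f, (j <= 2*K)%nat ->
  rsum (2*K+1) (fun i => rsum (2*K+1) (fun j' => Cmod2 (Xdelta K j (idx K i) (idx K j')) * f j')) = f j.
Proof.
  intros K j f Hj. rewrite (rsum_single _ _ K).
  - rewrite (rsum_single _ _ j).
    + unfold Xdelta. replace (Z.eqb (idx K K) 0) with true by (symmetry; apply Z.eqb_eq; unfold idx; lia).
      rewrite Z.eqb_refl. unfold Cmod2; simpl. ring.
    + lia.
    + intros i Hi Hik. unfold Xdelta.
      replace (Z.eqb (idx K i) (idx K j)) with false.
      * rewrite andb_false_r; unfold Cmod2; simpl; ring.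
      * symmetry; apply Z.eqb_neq; unfold idx; lia.
  - lia.
  - intros i Hi Hik; apply rsum_zero; intros j' _.
    unfold Xdelta; replace (Z.eqb (idx K i) 0) with false.
    + unfold Cmod2; simpl; ring.
    + symmetry; apply Z.eqb_neq; unfold idx; lia.
Qed.

Lemma condL_eq : forall k0 RR z0 K Ns Nr, (2*K+1 <= Ns)%nat -> (2*K+1 <= Nr)%nat ->
  condL k0 RR z0 K Ns Nr = dmax k0 RR K / dmin k0 RR K.
Proof.
  intros k0 RR z0 K Ns Nr HNs HNr.
  set (a := sqrt (INR Ns * INR Nr)).
  assert (Ha : 0 < a). { apply sqrt_lt_R0. apply Rmult_lt_0_compat; apply lt_0_INR; lia. }
  set (E := quot_set k0 RR z0 K Ns Nr).
  assert (Hval : forall X, Frob2 K X <> 0 -> E (sqrt (LFrob2 k0 RR z0 K Ns Nr X) / sqrt (Frob2 K X))).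
  { intros X HX. exists X. split; auto. }
  assert (Hd : forall j, (j <= 2*K)%nat -> dmin k0 RR K <= dj k0 RR K j <= dmax k0 RR K).
  { intros j Hj. split. apply (rmin_le (2*K) (fun j => Cmod (dcoef k0 RR (idx K j)))); auto.
    apply (rmax_ge (2*K) (fun j => Cmod (dcoef k0 RR (idx K j)))); auto. }
  assert (Hdm := dmin_nonneg k0 RR K).
  assert (Hfr : forall X, 0 <= Frob2 K X).
  { intros. unfold Frob2. apply rsum_nonneg; intros; apply rsum_nonneg; intros; apply Cmod2_nonneg. }
  assert (Hform : forall X, sqrt (LFrob2 k0 RR z0 K Ns Nr X) = a * sqrt (rsum (2*K+1) (fun i => rsum (2*K+1) (fun j =>
      Cmod2 (X (idx K i) (idx K j)) * (dj k0 RR K j * dj k0 RR K j))))).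
  { intros. rewrite LFrob2_eq by auto. unfold a. rewrite sqrt_mult.
    - f_equal. f_equal. apply rsum_ext; intros; apply rsum_ext; intros. unfold dj. rewrite <- Cmod2_sq. auto.
    - apply Rmult_le_pos; apply pos_INR.
    - apply rsum_nonneg; intros; apply rsum_nonneg; intros. apply Rmult_le_pos. apply Cmod2_nonneg.
      apply Cmod2_nonneg. }
  assert (Hatt : forall j, (j <= 2*K)%nat -> E (a * dj k0 RR K j)).
  { intros j Hj. assert (HF : Frob2 K (Xdelta K j) = 1).
    { unfold Frob2. rewrite <- (Xdelta_frob K j (fun _ => 1)) by auto. apply rsum_ext; intros; apply rsum_ext; intros. ring. }
    replace (a * dj k0 RR K j) with (sqrt (LFrob2 k0 RR z0 K Ns Nr (Xdelta K j)) / sqrt (Frob2 K (Xdelta K j))).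
    apply Hval. lra. rewrite HF, sqrt_1, Hform, Xdelta_frob by auto. rewrite sqrt_square. field.
    apply Cmod_nonneg. }
  assert (Hbnd : forall v, E v -> a * dmin k0 RR K <= v <= a * dmax k0 RR K).
  { intros v [X [HX ->]]. rewrite Hform.
    assert (HF : 0 < Frob2 K X) by (destruct (Hfr X); auto; congruence).
    assert (HsF : 0 < sqrt (Frob2 K X)) by (apply sqrt_lt_R0; auto).
    set (S := rsum (2*K+1) (fun i => rsum (2*K+1) (fun j => Cmod2 (X (idx K i) (idx K j)) * (dj k0 RR K j * dj k0 RR K j)))).
    assert (H1 : dmin k0 RR K * dmin k0 RR K * Frob2 K X <= S).
    { unfold Frob2, S. rewrite <- rsum_scal. apply rsum_le; intros i _. rewrite <- rsum_scal.
      apply rsum_le; intros j Hj. destruct (Hd j) as [A B]; [lia|].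
      pose proof (Cmod2_nonneg (X (idx K i) (idx K j))).
      rewrite (Rmult_comm (Cmod2 _)). apply Rmult_le_compat_r; auto. apply Rmult_le_compat; auto. }
    assert (H2 : S <= dmax k0 RR K * dmax k0 RR K * Frob2 K X).
    { unfold Frob2, S. rewrite <- rsum_scal. apply rsum_le; intros i _. rewrite <- rsum_scal.
      apply rsum_le; intros j Hj. destruct (Hd j) as [A B]; [lia|].
      pose proof (Cmod2_nonneg (X (idx K i) (idx K j))).
      assert (0 <= dj k0 RR K j) by (unfold dj; apply Cmod_nonneg).
      rewrite (Rmult_comm (Cmod2 _)). apply Rmult_le_compat_r; auto. apply Rmult_le_compat; auto; lra. }
    assert (Hdmx : 0 <= dmax k0 RR K) by (destruct (Hd O); [lia|lra]).
    split.
    - apply Rmult_le_reg_r with (sqrt (Frob2 K X)); auto. field_simplify; try lra.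
      rewrite Rmult_assoc. apply Rmult_le_compat_l; [lra|].
      rewrite <- (sqrt_square (dmin k0 RR K)) by auto. rewrite <- sqrt_mult by (try nra; lra).
      apply sqrt_le_1_alt. lra.
    - apply Rmult_le_reg_r with (sqrt (Frob2 K X)); auto. field_simplify; try lra.
      rewrite Rmult_assoc. apply Rmult_le_compat_l; [lra|].
      rewrite <- (sqrt_square (dmax k0 RR K)) by auto. rewrite <- sqrt_mult by (try nra; lra).
      apply sqrt_le_1_alt. lra. }
  assert (Hmax : sigma_max k0 RR z0 K Ns Nr = a * dmax k0 RR K).
  { assert (L : is_lub E (a * dmax k0 RR K)).
    { split. intros v Hv. apply Hbnd; auto.
      intros b Hb. apply Hb. destruct (rmax_att (2*K) (fun j => Cmod (dcoef k0 RR (idx K j)))) as [j [Hj Ej]].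
      unfold dmax. rewrite Ej. apply Hatt; auto. }
    unfold sigma_max. fold E. pose proof (epsilon_spec (inhabits 0) (is_lub E) (ex_intro _ _ L)) as L2.
    destruct L, L2. apply Rle_antisym; auto. }
  assert (Hmin : sigma_min k0 RR z0 K Ns Nr = a * dmin k0 RR K).
  { assert (L : is_glb E (a * dmin k0 RR K)).
    { split. intros v Hv. apply Hbnd; auto.
      intros b Hb. apply Hb. destruct (rmin_att (2*K) (fun j => Cmod (dcoef k0 RR (idx K j)))) as [j [Hj Ej]].
      unfold dmin. rewrite Ej. apply Hatt; auto. }
    unfold sigma_min. fold E. pose proof (epsilon_spec (inhabits 0) (is_glb E) (ex_intro _ _ L)) as L2.
    destruct L, L2. apply Rle_antisym; auto. }
  unfold condL. rewrite Hmax, Hmin.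
  destruct (Req_dec (dmin k0 RR K) 0) as [Z|NZ].
  - rewrite Z, Rmult_0_r. unfold Rdiv. rewrite Rinv_0. ring.
  - field. split; lra.
Qed.

Lemma sv_eq : forall a l, Un_cv (fun N => sum_f_R0 a N) l -> series_value a = l.
Proof. intros a l H. unfold series_value.
  pose proof (epsilon_spec (inhabits 0) (fun l => Un_cv (fun N => sum_f_R0 a N) l) (ex_intro _ l H)).
  eapply UL_sequence; eauto. Qed.

Lemma exp_cv : forall t, Un_cv (fun N => sum_f_R0 (fun k => / INR (fact k) * t^k) N) (exp t).
Proof. intros t. unfold exp. destruct (exist_exp t) as [l Hl]. simpl. exact Hl. Qed.

Lemma cv_comp : forall a b lb, (forall k, Rabs (a k) <= b k) -> Un_cv (fun N => sum_f_R0 b N) lb ->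
  exists l, Un_cv (fun N => sum_f_R0 a N) l /\ Rabs l <= lb.
Proof.
  intros a b lb Hab Hb.
  assert (Hbx : {l : R | Un_cv (fun N => sum_f_R0 b N) l}) by (exists lb; auto).
  destruct (Rseries_CV_comp (fun k => (Rabs (a k) + a k)/2) b) as [l1 H1].
  { intros k. pose proof (Hab k). pose proof (Rle_abs (a k)). pose proof (Rabs_pos (a k)).
    pose proof (Rabs_Ropp (a k)). pose proof (Rle_abs (- a k)). split; lra. }
  exact Hbx.
  destruct (Rseries_CV_comp (fun k => (Rabs (a k) - a k)/2) b) as [l2 H2].
  { intros k. pose proof (Hab k). pose proof (Rle_abs (a k)).
    pose proof (Rabs_Ropp (a k)). pose proof (Rle_abs (- a k)). split; lra. }
  exact Hbx.
  assert (Hc : Un_cv (fun N => sum_f_R0 a N) (l1 - l2)).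
  { eapply Un_cv_ext; [|apply (CV_minus _ _ _ _ H1 H2)].
    intros N. simpl. rewrite <- minus_sum. apply sum_eq. intros. field. }
  exists (l1 - l2). split; auto.
  apply (sum_cv_maj b (fun k _ => a k) 0 (l1 - l2) lb); auto.
Qed.

Lemma series_bound : forall a B t, (forall k, Rabs (a k) <= B * (/ INR (fact k) * t^k)) ->
  Rabs (series_value a) <= B * exp t.
Proof.
  intros a B t H.
  destruct (cv_comp a (fun k => B * (/ INR (fact k) * t^k)) (B * exp t)) as [l [Hl Hle]]; auto.
  { eapply Un_cv_ext; [|apply (CV_mult (fun _ => B) (fun N => sum_f_R0 (fun k => / INR (fact k) * t^k) N) B (exp t)); [intros e He; exists O; intros; unfold Rdist; rewrite Rminus_diag, Rabs_R0; lra| apply exp_cv]].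
    intros N. simpl. rewrite scal_sum. apply sum_eq. intros; ring. }
  rewrite (sv_eq a l); auto.
Qed.

Lemma rsum_sum_f : forall n f, rsum (S n) f = sum_f_R0 f n.
Proof. induction n; intros; simpl. ring. simpl in IHn. rewrite <- IHn. auto. Qed.

Lemma exp_partial : forall t n, 0 <= t -> rsum n (fun k => / INR (fact k) * t^k) <= exp t.
Proof. intros t n Ht. destruct n. simpl. pose proof (exp_pos t); lra.
  rewrite rsum_sum_f. apply growing_ineq; [|apply exp_cv].
  intros N. assert (0 <= / INR (fact (S N)) * t ^ S N).
  { apply Rmult_le_pos. left; apply Rinv_0_lt_compat, INR_fact_lt_0. apply pow_le; auto. }
  rewrite tech5. lra. Qed.

Lemma fact_ge1 : forall m, 1 <= INR (fact m).
Proof. intros. apply (le_INR 1). pose proof (lt_O_fact m). lia. Qed.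
Lemma n_le_fact : forall m, INR m <= INR (fact m).
Proof. intros. apply le_INR. induction m. simpl; lia. simpl. pose proof (lt_O_fact m). nia. Qed.

Lemma inv_fact_le1 : forall m, 0 < / INR (fact m) <= 1.
Proof. intros. pose proof (fact_ge1 m). split. apply Rinv_0_lt_compat; lra.
  rewrite <- Rinv_1. apply Rinv_le_contravar; lra. Qed.

Lemma mul_le_self : forall c d, 0 <= c -> d <= 1 -> c * d <= c.
Proof. intros. nra. Qed.

Lemma J_bound : forall n x, 0 < x -> Rabs (BesselJ n x) <= (x/2)^n * exp (x^2/4).
Proof.
  intros n x Hx. unfold BesselJ. apply series_bound. intros k.
  pose proof (inv_fact_le1 k). pose proof (inv_fact_le1 (n+k)).
  assert (E : (-1) ^ k / (INR (fact k) * INR (fact (n + k))) * (x / 2) ^ (2 * k + n) =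
     (-1)^k * (((x/2)^n * (/ INR (fact k) * (x^2/4)^k)) * / INR (fact (n+k)))).
  { rewrite pow_add, pow_mult. replace ((x/2)^2) with (x^2/4) by field.
    field. split; apply not_0_INR; apply fact_neq_0. }
  rewrite E, Rabs_mult, pow_1_abs, Rmult_1_l.
  assert (0 <= (x/2)^n * (/ INR (fact k) * (x^2/4)^k)).
  { apply Rmult_le_pos. apply pow_le; lra. apply Rmult_le_pos. lra. apply pow_le. nra. }
  rewrite Rabs_pos_eq by (apply Rmult_le_pos; lra). apply mul_le_self; lra.
Qed.

Lemma harmonic_bounds : forall m, 0 <= harmonic m <= INR m.
Proof. induction m. unfold harmonic; simpl; lra.
  unfold harmonic in *. change (rsum (S m) (fun k => / INR (S k))) with (rsum m (fun k => / INR (S k)) + / INR (S m)).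
  assert (0 < / INR (S m) <= 1). { split. apply Rinv_0_lt_compat, lt_0_INR; lia.
    rewrite <- Rinv_1. apply Rinv_le_contravar. lra. apply (le_INR 1). lia. }
  pose proof (S_INR m). lra. Qed.

Lemma dummy_G : True. Proof. exact I. Qed.
Lemma G_bound : forall n x,
  Rabs (series_value (fun k => (psi1 k + psi1 (n + k)) * (- (x ^ 2 / 4)) ^ k
                               / (INR (fact k) * INR (fact (n + k)))))
  <= (2 + 2 * Rabs euler_gamma) * exp (x^2/4).
Proof.
  intros n x. apply series_bound. intros k.
  pose proof (inv_fact_le1 k). pose proof (inv_fact_le1 (n+k)).
  assert (E : (psi1 k + psi1 (n + k)) * (- (x ^ 2 / 4)) ^ k / (INR (fact k) * INR (fact (n + k))) =
    ((-1)^k * (/ INR (fact k) * (x^2/4)^k)) * ((psi1 k + psi1 (n + k)) * / INR (fact (n + k)))).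
  { replace (- (x^2/4)) with ((-1) * (x^2/4)) by ring. rewrite Rpow_mult_distr.
    field. split; apply not_0_INR; apply fact_neq_0. }
  rewrite E, Rabs_mult, Rabs_mult, pow_1_abs, Rmult_1_l.
  assert (0 <= / INR (fact k) * (x^2/4)^k).
  { apply Rmult_le_pos. lra. apply pow_le. nra. }
  rewrite (Rabs_pos_eq (/ INR (fact k) * (x^2/4)^k)) by auto.
  rewrite Rmult_comm. apply Rmult_le_compat_r; auto.
  unfold psi1. pose proof (harmonic_bounds k). pose proof (harmonic_bounds (n+k)).
  pose proof (n_le_fact (n+k)). pose proof (Rabs_pos euler_gamma).
  rewrite Rabs_mult, (Rabs_pos_eq (/ INR (fact (n+k)))) by lra.
  assert (Hk : INR k <= INR (n+k)) by (apply le_INR; lia).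
  assert (Rabs (harmonic k - euler_gamma + (harmonic (n + k) - euler_gamma)) <= 2 * INR (n+k) + 2 * Rabs euler_gamma).
  { assert (forall a b, 0 <= a -> Rabs (a - b) <= a + Rabs b) as Hab.
    { intros a b Ha. unfold Rabs; repeat destruct Rcase_abs; lra. }
    eapply Rle_trans. apply Rabs_triang.
    pose proof (Hab (harmonic k) euler_gamma ltac:(lra)).
    pose proof (Hab (harmonic (n+k)) euler_gamma ltac:(lra)). lra. }
  set (c := / INR (fact (n+k))) in *.
  assert (INR (n+k) * c <= 1).
  { unfold c. apply Rmult_le_reg_r with (INR (fact (n+k))). apply INR_fact_lt_0.
    field_simplify. lra. apply not_0_INR, fact_neq_0. }
  assert (0 <= Rabs (harmonic k - euler_gamma + (harmonic (n + k) - euler_gamma))) by apply Rabs_pos.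
  nra.
Qed.

Definition Fsum (n : nat) (x : R) : R :=
  rsum n (fun k => INR (fact (n - k - 1)) / INR (fact k) * (x ^ 2 / 4) ^ k).

Lemma F_upper : forall n x, 0 <= Fsum n x <= INR (fact (n-1)) * exp (x^2/4).
Proof.
  intros n x. unfold Fsum. split.
  - apply rsum_nonneg; intros k _. apply Rmult_le_pos. unfold Rdiv. apply Rmult_le_pos.
    apply pos_INR. left; apply Rinv_0_lt_compat, INR_fact_lt_0. apply pow_le. nra.
  - eapply Rle_trans; [|apply Rmult_le_compat_l; [apply pos_INR|apply (exp_partial _ n)]; nra].
    rewrite <- rsum_scal. apply rsum_le; intros k Hk.
    assert (INR (fact (n-k-1)) <= INR (fact (n-1))) by (apply le_INR, fact_le; lia).
    assert (0 <= / INR (fact k) * (x^2/4)^k).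
    { apply Rmult_le_pos. left; apply Rinv_0_lt_compat, INR_fact_lt_0. apply pow_le. nra. }
    unfold Rdiv. rewrite Rmult_assoc. apply Rmult_le_compat_r; auto.
Qed.

Lemma F_lower : forall n x, (1 <= n)%nat -> INR (fact (n-1)) <= Fsum n x.
Proof.
  intros n x Hn. unfold Fsum. eapply Rle_trans; [|apply (rsum_term_le n _ O); [lia|]].
  - simpl. replace (n - 0 - 1)%nat with (n-1)%nat by lia. lra.
  - intros k _. apply Rmult_le_pos. unfold Rdiv. apply Rmult_le_pos.
    apply pos_INR. left; apply Rinv_0_lt_compat, INR_fact_lt_0. apply pow_le. nra.
Qed.

Definition Wc (x : R) : R := (2/PI) * Rabs (ln (x/2)) * exp (x^2/4) + /PI * (2 + 2 * Rabs euler_gamma) * exp (x^2/4).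

Lemma Y_near : forall n x, 0 < x ->
  Rabs (BesselY n x + / PI * / ((x/2)^n) * Fsum n x) <= Wc x * (x/2)^n.
Proof.
  intros n x Hx. unfold BesselY. fold (Fsum n x).
  set (G := series_value _).
  pose proof (J_bound n x Hx). pose proof (G_bound n x). fold G in H0.
  pose proof PI_RGT_0.
  assert (Hy : 0 < (x/2)^n) by (apply pow_lt; lra).
  replace (- / PI * / (x / 2) ^ n * Fsum n x + 2 / PI * ln (x / 2) * BesselJ n x -
           (x / 2) ^ n / PI * G + / PI * / (x / 2) ^ n * Fsum n x)
     with ((2/PI * ln (x/2)) * BesselJ n x + (- ((x/2)^n / PI)) * G) by ring.
  eapply Rle_trans. apply Rabs_triang. rewrite !Rabs_mult, Rabs_Ropp.
  rewrite (Rabs_pos_eq (2/PI)) by (unfold Rdiv; apply Rmult_le_pos; [lra|left; apply Rinv_0_lt_compat; lra]).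
  rewrite (Rabs_pos_eq ((x/2)^n / PI)) by (unfold Rdiv; apply Rmult_le_pos; [lra|left; apply Rinv_0_lt_compat; lra]).
  unfold Wc.
  assert (0 <= 2/PI * Rabs (ln (x/2))).
  { apply Rmult_le_pos. unfold Rdiv; apply Rmult_le_pos; [lra|left; apply Rinv_0_lt_compat; lra]. apply Rabs_pos. }
  assert (A1 : 2/PI * Rabs (ln (x/2)) * Rabs (BesselJ n x) <= 2/PI * Rabs (ln (x/2)) * ((x/2)^n * exp (x^2/4)))
    by (apply Rmult_le_compat_l; auto).
  assert (A2 : (x/2)^n / PI * Rabs G <= (x/2)^n / PI * ((2 + 2 * Rabs euler_gamma) * exp (x^2/4))).
  { apply Rmult_le_compat_l; auto. unfold Rdiv; apply Rmult_le_pos; [lra|left; apply Rinv_0_lt_compat; lra]. }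
  unfold Rdiv in *. nra.
Qed.

Lemma Cmod_le_sum : forall a b, Cmod (a, b) <= Rabs a + Rabs b.
Proof. intros. unfold Cmod, Cmod2; cbn [fst snd]. pose proof (Rabs_pos a). pose proof (Rabs_pos b).
  rewrite <- (sqrt_square (Rabs a + Rabs b)) by lra.
  apply sqrt_le_1_alt. rewrite <- (pow2_abs a), <- (pow2_abs b). nra. Qed.
Lemma Cmod_ge_snd : forall a b, Rabs b <= Cmod (a, b).
Proof. intros. unfold Cmod, Cmod2; cbn [fst snd]. rewrite <- (sqrt_square (Rabs b)) by apply Rabs_pos.
  apply sqrt_le_1_alt. rewrite <- (pow2_abs b). nra. Qed.

Definition hB (n : nat) (x : R) : R := Cmod (BesselJ n x, BesselY n x).

Lemma h_upper : forall n x, 0 < x ->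
  hB n x <= (1 + Wc x + / PI) * exp (x^2/4) * (INR (fact (n-1)) / (x/2)^n + (x/2)^n).
Proof.
  intros n x Hx. unfold hB. eapply Rle_trans. apply Cmod_le_sum.
  pose proof (J_bound n x Hx). pose proof (Y_near n x Hx). pose proof (F_upper n x).
  pose proof PI_RGT_0. assert (Hy : 0 < (x/2)^n) by (apply pow_lt; lra).
  assert (HW : 0 <= Wc x).
  { unfold Wc. assert (0 <= /PI) by (left; apply Rinv_0_lt_compat; lra). pose proof (exp_pos (x^2/4)).
    pose proof (Rabs_pos (ln (x/2))). pose proof (Rabs_pos euler_gamma). unfold Rdiv. apply Rplus_le_le_0_compat; repeat apply Rmult_le_pos; lra. }
  assert (HE : 1 <= exp (x^2/4)). { pose proof (exp_ineq1_le (x^2/4)). nra. }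
  assert (HY : Rabs (BesselY n x) <= Wc x * (x/2)^n + / PI * / (x/2)^n * Fsum n x).
  { replace (BesselY n x) with ((BesselY n x + / PI * / ((x/2)^n) * Fsum n x) - / PI * / ((x/2)^n) * Fsum n x) by ring.
    eapply Rle_trans. apply Rabs_triang. rewrite Rabs_Ropp.
    rewrite (Rabs_pos_eq (/ PI * / (x/2)^n * Fsum n x)). lra.
    apply Rmult_le_pos. apply Rmult_le_pos; left; apply Rinv_0_lt_compat; lra. lra. }
  set (E := exp (x^2/4)) in *. set (f := INR (fact (n-1))) in *. set (yn := (x/2)^n) in *.
  assert (0 <= f) by apply pos_INR.
  assert (0 < / yn) by (apply Rinv_0_lt_compat; lra).
  assert (0 < / PI) by (apply Rinv_0_lt_compat; lra).
  assert (/PI * /yn * Fsum n x <= /PI * /yn * (f * E)).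
  { apply Rmult_le_compat_l. nra. lra. }
  assert (W1 : Wc x * yn <= Wc x * E * yn).
  { rewrite (Rmult_comm (Wc x) E), Rmult_assoc. rewrite <- (Rmult_1_l (Wc x * yn)) at 1.
    apply Rmult_le_compat_r; [apply Rmult_le_pos|]; lra. }
  assert (0 <= Wc x * E * (f * / yn)) by (repeat apply Rmult_le_pos; lra).
  assert (0 <= / PI * E * yn) by (repeat apply Rmult_le_pos; lra).
  unfold Rdiv.
  replace ((1 + Wc x + / PI) * E * (f * / yn + yn)) with
    (E * yn + Wc x * E * yn + / PI * / yn * (f * E) + (E * (f * / yn) + Wc x * E * (f * / yn) + / PI * E * yn)) by ring.
  assert (0 <= E * (f * / yn)) by (repeat apply Rmult_le_pos; lra).
  lra.
Qed.

Lemma h_lower : forall n x, 0 < x -> (1 <= n)%nat ->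
  / PI * (INR (fact (n-1)) / (x/2)^n) - Wc x * (x/2)^n <= hB n x.
Proof.
  intros n x Hx Hn. unfold hB. eapply Rle_trans; [|apply Cmod_ge_snd].
  pose proof (Y_near n x Hx). pose proof (F_lower n x Hn).
  pose proof PI_RGT_0. assert (Hy : 0 < (x/2)^n) by (apply pow_lt; lra).
  assert (0 < / (x/2)^n) by (apply Rinv_0_lt_compat; lra).
  assert (0 < / PI) by (apply Rinv_0_lt_compat; lra).
  assert (/PI * / (x/2)^n * INR (fact (n-1)) <= /PI * / (x/2)^n * Fsum n x).
  { apply Rmult_le_compat_l. nra. lra. }
  assert (Rabs (/ PI * / (x/2)^n * Fsum n x) - Rabs (BesselY n x) <= Rabs (BesselY n x + / PI * / ((x/2)^n) * Fsum n x)).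
  { replace (/ PI * / (x/2)^n * Fsum n x) with ((BesselY n x + / PI * / ((x/2)^n) * Fsum n x) - BesselY n x) at 1 by ring.
    pose proof (Rabs_triang (BesselY n x + / PI * / ((x/2)^n) * Fsum n x) (- BesselY n x)) as T.
    rewrite Rabs_Ropp in T. unfold Rminus. lra. }
  pose proof (Rle_abs (/ PI * / (x/2)^n * Fsum n x)).
  unfold Rdiv. lra.
Qed.

Lemma exp_INR_mul : forall n a, exp (INR n * a) = exp a ^ n.
Proof. induction n; intros. simpl. rewrite Rmult_0_l, exp_0. auto.
  rewrite S_INR. replace ((INR n + 1) * a) with (INR n * a + a) by ring. rewrite exp_plus, IHn. simpl. ring. Qed.

Lemma e_le : forall K : nat, (1 <= K)%nat -> exp 1 <= ((INR K + 1) / INR K) ^ (S K).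
Proof.
  intros K HK. assert (HK' : 1 <= INR K) by (apply (le_INR 1); auto).
  assert (H1 : exp (/ (INR K + 1)) <= (INR K + 1) / INR K).
  { pose proof (exp_ineq1_le (- / (INR K + 1))). rewrite exp_Ropp in H.
    assert (0 < exp (/ (INR K + 1))) by apply exp_pos.
    assert (1 + - / (INR K + 1) = INR K / (INR K + 1)) by (field; lra). rewrite H1 in H.
    apply Rmult_le_reg_r with (INR K / (INR K + 1)). apply Rdiv_lt_0_compat; lra.
    replace ((INR K + 1) / INR K * (INR K / (INR K + 1))) with 1 by (field; lra).
    apply Rmult_le_reg_l with (/ exp (/ (INR K + 1))). apply Rinv_0_lt_compat; auto.
    rewrite <- Rmult_assoc, Rinv_l, Rmult_1_l, Rmult_1_r by lra. auto. }
  replace (exp 1) with (exp (/ (INR K + 1)) ^ (S K)).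
  - apply pow_incr. split; auto. left; apply exp_pos.
  - rewrite <- exp_INR_mul. f_equal. rewrite S_INR. field. lra.
Qed.

Lemma stirling : forall K : nat, (1 <= K)%nat -> INR (fact (K-1)) <= exp 1 * (INR K / exp 1) ^ K.
Proof.
  intros K HK. induction K as [|K IH]. lia.
  destruct K as [|K].
  - simpl. field_simplify. lra. pose proof (exp_pos 1). lra.
  - replace (S (S K) - 1)%nat with (S K) by lia.
    replace (S K - 1)%nat with K in IH by lia.
    specialize (IH ltac:(lia)).
    change (fact (S K)) with (S K * fact K)%nat. rewrite mult_INR.
    set (k := INR (S K)) in *. assert (Hk : 1 <= k) by (unfold k; apply (le_INR 1); lia).
    pose proof (e_le (S K) ltac:(lia)) as He. fold k in He.
    rewrite S_INR. fold k. pose proof (exp_pos 1) as Hp.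
    eapply Rle_trans. apply Rmult_le_compat_l. lra. apply IH.
    (* k * (e * (k/e)^(S K)) <= e * ((k+1)/e)^(S(S K)) *)
    replace ((k+1)/exp 1) with ((k+1)/k * (k / exp 1)) by (field; lra).
    rewrite Rpow_mult_distr. change (S (S K)) with (S (S K)).
    replace ((k / exp 1) ^ S (S K)) with ((k / exp 1) ^ S K * (k / exp 1)) by (simpl; ring).
    assert (0 < (k / exp 1) ^ S K) by (apply pow_lt; apply Rdiv_lt_0_compat; lra).
    replace (exp 1 * (((k + 1) / k) ^ S (S K) * ((k / exp 1) ^ S K * (k / exp 1))))
      with (((k + 1) / k) ^ S (S K) * ((k / exp 1) ^ S K * k)) by (field; lra).
    replace (k * (exp 1 * (k / exp 1) ^ S K)) with (exp 1 * ((k / exp 1) ^ S K * k)) by ring.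
    apply Rmult_le_compat_r; [apply Rmult_le_pos; lra | lra].
Qed.

Lemma pow2_ge : forall m, INR m <= 2 ^ m.
Proof. induction m. simpl; lra. rewrite S_INR. simpl. assert (1 <= 2^m) by (apply pow_R1_Rle; lra). lra. Qed.

Lemma fact_dom : forall M q, 0 < q -> exists N, forall m, (N <= m)%nat -> M * q ^ m <= INR (fact (m-1)).
Proof.
  intros M q Hq. destruct (cv_speed_pow_fact (2*q) (/ (Rabs M + 1))) as [N HN].
  { apply Rinv_0_lt_compat. pose proof (Rabs_pos M). lra. }
  exists (S N). intros m Hm. destruct m as [|m]. lia.
  specialize (HN (S m) ltac:(lia)). unfold Rdist in HN. rewrite Rminus_0_r in HN.
  replace (S m - 1)%nat with m by lia.
  assert (Hf : 0 < INR (fact (S m))) by apply INR_fact_lt_0.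
  assert (0 < (2*q)^(S m)) by (apply pow_lt; lra).
  rewrite Rabs_pos_eq in HN by (apply Rlt_le, Rdiv_lt_0_compat; lra).
  assert (A : (Rabs M + 1) * (2*q)^(S m) < INR (fact (S m))).
  { apply Rmult_lt_reg_r with (/ (Rabs M + 1)). apply Rinv_0_lt_compat. pose proof (Rabs_pos M); lra.
    replace ((Rabs M + 1) * (2 * q) ^ S m * / (Rabs M + 1)) with ((2*q)^(S m)) by (field; pose proof (Rabs_pos M); lra).
    apply Rmult_lt_reg_r with (/ INR (fact (S m))). apply Rinv_0_lt_compat; auto.
    replace (INR (fact (S m)) * / (Rabs M + 1) * / INR (fact (S m))) with (/ (Rabs M + 1)) by (field; split; pose proof (Rabs_pos M); lra).
    exact HN. }
  change (fact (S m)) with (S m * fact m)%nat in A. rewrite mult_INR in A.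
  rewrite Rpow_mult_distr in A. pose proof (pow2_ge (S m)).
  assert (0 < q ^ S m) by (apply pow_lt; lra).
  assert (0 < INR (S m)) by (apply lt_0_INR; lia).
  assert (M * q^(S m) <= Rabs M * q^(S m)) by (apply Rmult_le_compat_r; [lra|apply Rle_abs]).
  assert (INR (S m) * (Rabs M * q^(S m)) <= INR (S m) * INR (fact m)).
  { assert (Rabs M * INR (S m) * q^(S m) <= (Rabs M + 1) * (2 ^ S m * q ^ S m)).
    { pose proof (Rabs_pos M).
      assert (Rabs M * INR (S m) <= (Rabs M + 1) * 2^S m) by (apply Rmult_le_compat; lra).
      rewrite <- Rmult_assoc. apply Rmult_le_compat_r; lra. }
    nra. }
  apply Rmult_le_reg_l in H4; auto. lra.
Qed.

Lemma Cmod_mul : forall a b, Cmod (Cmul a b) = Cmod a * Cmod b.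
Proof. intros. unfold Cmod. rewrite Cmod2_mul. apply sqrt_mult; apply Cmod2_nonneg. Qed.

Lemma dcoef_mod : forall k0 RR z, Cmod (dcoef k0 RR z) = hB (Z.abs_nat z) (k0 * RR) / 4.
Proof.
  intros. unfold dcoef. rewrite Cmod_mul.
  assert (E1 : Cmod (0, / 4) = / 4).
  { unfold Cmod, Cmod2; cbn [fst snd]. replace (0 ^ 2 + (/ 4) ^ 2) with (/4 * /4) by ring.
    apply sqrt_square. lra. }
  rewrite E1. unfold Hankel1, hB. destruct (z <? 0)%Z.
  - unfold Cmod, Cscal, Cmod2. cbn [fst snd].
    set (c := (-1) ^ Z.abs_nat z). assert (c^2 = 1).
    { unfold c. rewrite <- pow_mult, Nat.mul_comm, pow_mult. replace ((-1)^2) with 1 by ring. apply pow1. }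
    replace ((c * BesselJ (Z.abs_nat z) (k0 * RR)) ^ 2 + (c * BesselY (Z.abs_nat z) (k0 * RR)) ^ 2)
      with (BesselJ (Z.abs_nat z) (k0 * RR) ^ 2 + BesselY (Z.abs_nat z) (k0 * RR) ^ 2)
      by (rewrite !Rpow_mult_distr, H; ring). field.
  - field.
Qed.

Lemma nat_above : forall r, exists n : nat, r <= INR n.
Proof. intros. destruct (INR_unbounded r) as [n Hn]. exists n. lra. Qed.

Theorem mainTheorem8 :
  forall k0 R0 : R, 0 < k0 -> 0 < R0 ->
  exists C : R, 0 < C /\
  exists K0 : nat, forall K : nat, (K0 <= K)%nat ->
  forall (Ns Nr : nat) (z0 : R * R),
    (2 * K + 1 <= Ns)%nat -> (2 * K + 1 <= Nr)%nat ->
    condL k0 R0 z0 K Ns Nr = dmax k0 R0 K / dmin k0 R0 K /\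
    dmax k0 R0 K / dmin k0 R0 K <= C * (C_R k0 R0 * INR K) ^ K.
Proof.
  intros k0 RR Hk0 HRR.
  set (x := k0 * RR). assert (Hx : 0 < x) by (unfold x; nra).
  set (y := x / 2). assert (Hy : 0 < y) by (unfold y; lra).
  pose proof PI_RGT_0 as HPI.
  assert (HE1 : 1 <= exp 1). { pose proof (exp_ineq1_le 1). lra. }
  assert (HW : 0 <= Wc x).
  { unfold Wc. assert (0 <= /PI) by (left; apply Rinv_0_lt_compat; lra). pose proof (exp_pos (x^2/4)).
    pose proof (Rabs_pos (ln (x/2))). pose proof (Rabs_pos euler_gamma). unfold Rdiv.
    apply Rplus_le_le_0_compat; repeat apply Rmult_le_pos; lra. }
  set (Q := (1 + Wc x + / PI) * exp (x^2/4)).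
  assert (HQ : 0 < Q).
  { unfold Q. apply Rmult_lt_0_compat. assert (0 < /PI) by (apply Rinv_0_lt_compat; lra). lra. apply exp_pos. }
  set (v := fun n => INR (fact (n-1)) / y ^ n).
  assert (Hv0 : forall n, 0 <= v n).
  { intros. unfold v. apply Rmult_le_pos. apply pos_INR. left; apply Rinv_0_lt_compat, pow_lt; lra. }
  assert (Hhu : forall n, hB n x <= Q * (v n + y ^ n)).
  { intros. unfold Q, v, y. apply h_upper; auto. }
  destruct (nat_above y) as [m1 Hm1]. set (m0 := S m1).
  assert (Hm0 : y <= INR m0) by (unfold m0; rewrite S_INR; lra).
  assert (Hstep : forall n, (m0 <= n)%nat -> v n <= v (S n)).
  { intros n Hn. unfold v. destruct n as [|n]. unfold m0 in Hn; lia.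
    replace (S (S n) - 1)%nat with (S n) by lia. replace (S n - 1)%nat with n by lia.
    change (fact (S n)) with (S n * fact n)%nat. rewrite mult_INR.
    assert (INR m0 <= INR (S n)) by (apply le_INR; auto).
    assert (0 < y ^ S n) by (apply pow_lt; lra).
    change (y ^ S (S n)) with (y * y ^ S n).
    apply Rmult_le_reg_r with (y * y ^ S n). nra.
    field_simplify; try lra. pose proof (pos_INR (fact n)).
    assert (y * INR (fact n) <= INR (S n) * INR (fact n)) by (apply Rmult_le_compat_r; lra). nra. }
  assert (Hmono : forall K n, (m0 <= n <= K)%nat -> v n <= v K).
  { induction K; intros n Hn. replace n with O by lia. lra.
    destruct (Nat.eq_dec n (S K)). subst; lra.
    eapply Rle_trans. apply IHK. lia. apply Hstep. lia. }
  set (V0 := rsum (S m0) v).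
  assert (HV0 : 0 <= V0) by (apply rsum_nonneg; auto).
  assert (Hvn : forall K n, (m0 <= K)%nat -> (n <= K)%nat -> v n <= V0 + v K).
  { intros K n HK Hn. destruct (le_lt_dec n m0).
    - pose proof (rsum_term_le (S m0) v n ltac:(lia) ltac:(intros; auto)). fold V0 in H. pose proof (Hv0 K). lra.
    - pose proof (Hmono K n ltac:(lia)). lra. }
  assert (Hyn : forall K n, (n <= K)%nat -> y ^ n <= 1 + y ^ K).
  { intros K n Hn. assert (0 <= y^K) by (apply pow_le; lra). destruct (Rle_dec y 1).
    - assert (y^n <= 1 ^ n) by (apply pow_incr; lra). rewrite pow1 in H0. lra.
    - assert (y^n <= y^K) by (apply Rle_pow; [lra|auto]). lra. }
  destruct (nat_above (exp 1 * y * (1 + y) + INR m0 + 1)) as [K1 HK1].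
  assert (HCR : forall K, C_R k0 RR * INR K = INR K / exp 1 / y).
  { intros. unfold C_R, y, x. field. pose proof (exp_pos 1). repeat split; lra. }
  assert (Hbig : forall K, (K1 <= K)%nat -> 1 <= C_R k0 RR * INR K /\ y <= C_R k0 RR * INR K /\ (m0 <= K)%nat /\ (1 <= K)%nat).
  { intros K HK. assert (INR K1 <= INR K) by (apply le_INR; auto). rewrite HCR.
    pose proof (exp_pos 1).
    assert (exp 1 * y * (1 + y) <= INR K) by (pose proof (pos_INR m0); lra).
    assert (INR m0 + 1 <= INR K) by (assert (0 <= exp 1 * y * (1 + y)) by (apply Rmult_le_pos; [apply Rmult_le_pos|]; lra); lra).
    repeat split.
    - apply Rmult_le_reg_r with (exp 1 * y). apply Rmult_lt_0_compat; lra.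
      field_simplify; try lra. nra.
    - apply Rmult_le_reg_r with (exp 1 * y). apply Rmult_lt_0_compat; lra.
      field_simplify; try lra. nra.
    - apply INR_le. lra.
    - apply INR_le. simpl. pose proof (pos_INR m0). lra. }
  assert (Hdmax : forall K, (K1 <= K)%nat -> dmax k0 RR K <= Q / 4 * (V0 + exp 1 + 2) * (C_R k0 RR * INR K) ^ K).
  { intros K HK. destruct (Hbig K HK) as [B1 [B2 [B3 B4]]].
    set (P := (C_R k0 RR * INR K) ^ K).
    assert (HP1 : 1 <= P) by (apply pow_R1_Rle; auto).
    assert (HyK : y ^ K <= P) by (apply pow_incr; lra).
    assert (HvK : v K <= exp 1 * P).
    { unfold v, P. rewrite HCR. pose proof (stirling K B4). pose proof (exp_pos 1).
      replace ((INR K / exp 1 / y) ^ K) with ((INR K / exp 1) ^ K / y ^ K).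
      - unfold Rdiv. rewrite <- Rmult_assoc. apply Rmult_le_compat_r; auto.
        left; apply Rinv_0_lt_compat, pow_lt; lra.
      - unfold Rdiv. rewrite (Rpow_mult_distr (INR K * / exp 1)), pow_inv. auto. }
    unfold dmax. destruct (rmax_att (2*K) (fun j => Cmod (dcoef k0 RR (idx K j)))) as [j [Hj Ej]].
    rewrite Ej. rewrite dcoef_mod. fold x.
    set (m := Z.abs_nat (idx K j)). assert (Hm : (m <= K)%nat) by (unfold m, idx; lia).
    pose proof (Hhu m). pose proof (Hvn K m B3 Hm). pose proof (Hyn K m Hm).
    assert (v m + y ^ m <= (V0 + exp 1 + 2) * P) by nra.
    assert (Q * (v m + y^m) <= Q * ((V0 + exp 1 + 2) * P)) by (apply Rmult_le_compat_l; lra).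
    lra. }
  set (s := Rmax 1 y). assert (Hs1 : 1 <= s) by apply Rmax_l. assert (Hsy : y <= s) by apply Rmax_r.
  destruct (fact_dom (PI * (1 + Wc x)) (s^2) ltac:(apply pow_lt; lra)) as [N0 HN0].
  set (N1 := S N0).
  assert (Hlow : forall m, (N1 <= m)%nat -> 1 <= hB m x).
  { intros m Hm. pose proof (h_lower m x Hx ltac:(unfold N1 in Hm; lia)) as HL. fold y in HL.
    pose proof (HN0 m ltac:(unfold N1 in Hm; lia)) as HF.
    assert (Hsm : 1 <= s^m) by (apply pow_R1_Rle; auto).
    assert (Hysm : y^m <= s^m) by (apply pow_incr; lra).
    assert (Hym : 0 < y^m) by (apply pow_lt; lra).
    rewrite <- pow_mult, Nat.mul_comm, pow_mult in HF. change ((s^m)^2) with (s^m * (s^m * 1)) in HF.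
    assert (INR (fact (m-1)) / y^m >= INR (fact (m-1)) / s^m).
    { apply Rle_ge. unfold Rdiv. apply Rmult_le_compat_l. apply pos_INR.
      apply Rinv_le_contravar; lra. }
    assert (INR (fact (m-1)) / s^m >= PI * (1 + Wc x) * s^m).
    { apply Rle_ge. apply Rmult_le_reg_r with (s^m). lra. field_simplify; lra. }
    assert (/PI * (PI * (1 + Wc x) * s^m) = (1 + Wc x) * s^m) by (field; lra).
    assert (/PI * (INR (fact (m-1)) / y^m) >= /PI * (PI * (1 + Wc x) * s^m)).
    { apply Rle_ge, Rmult_le_compat_l. left; apply Rinv_0_lt_compat; lra. lra. }
    assert (Wc x * y^m <= Wc x * s^m) by (apply Rmult_le_compat_l; lra).
    nra. }
  destruct (classic (exists m, (m < N1)%nat /\ hB m x = 0)) as [[m [Hm Hz]] | Hnz].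
  -
    exists 1. split. lra. exists (Nat.max K1 N1). intros K HK Ns Nr z0 HNs HNr.
    split. apply condL_eq; auto.
    assert (Hdm : dmin k0 RR K = 0).
    { apply Rle_antisym; [|apply dmin_nonneg].
      unfold dmin. eapply Rle_trans. apply (rmin_le _ _ (K + m)). lia.
      rewrite dcoef_mod. fold x. unfold idx.
      replace (Z.of_nat (K + m) - Z.of_nat K)%Z with (Z.of_nat m) by lia.
      rewrite Zabs2Nat.id, Hz. lra. }
    rewrite Hdm. unfold Rdiv. rewrite Rinv_0, Rmult_0_r.
    destruct (Hbig K ltac:(lia)) as [B1 _]. rewrite Rmult_1_l. apply pow_le. lra.
  - set (c1 := rmin_upto N1 (fun m => Rmin 1 (hB m x))).
    assert (Hc1 : 0 < c1).
    { unfold c1. destruct (rmin_att N1 (fun m => Rmin 1 (hB m x))) as [j [Hj Ej]]. rewrite Ej.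
      apply Rmin_glb_lt. lra. destruct (Nat.eq_dec j N1).
      - subst. pose proof (Hlow N1 ltac:(lia)). lra.
      - assert (hB j x <> 0) by (intro; apply Hnz; exists j; split; auto; lia).
        assert (0 <= hB j x) by apply Cmod_nonneg. lra. }
    assert (Hhc : forall m, c1 <= hB m x).
    { intros m. destruct (le_lt_dec m N1).
      - eapply Rle_trans. apply (rmin_le N1 (fun m => Rmin 1 (hB m x)) m); auto. apply Rmin_r.
      - eapply Rle_trans. apply (rmin_le N1 (fun m => Rmin 1 (hB m x)) N1); auto.
        pose proof (Hlow m ltac:(lia)). pose proof (Rmin_l 1 (hB N1 x)). simpl in *. lra. }
    exists (Q * (V0 + exp 1 + 2) / c1). split.
    { apply Rdiv_lt_0_compat; auto. apply Rmult_lt_0_compat; lra. }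
    exists K1. intros K HK Ns Nr z0 HNs HNr.
    split. apply condL_eq; auto.
    assert (Hdm : c1 / 4 <= dmin k0 RR K).
    { unfold dmin. destruct (rmin_att (2*K) (fun j => Cmod (dcoef k0 RR (idx K j)))) as [j [Hj Ej]].
      rewrite Ej, dcoef_mod. fold x. pose proof (Hhc (Z.abs_nat (idx K j))). lra. }
    pose proof (Hdmax K HK).
    assert (0 <= dmax k0 RR K).
    { unfold dmax. eapply Rle_trans; [|apply (rmax_ge _ _ O); lia]. apply Cmod_nonneg. }
    apply Rle_trans with (dmax k0 RR K / (c1/4)).
    + unfold Rdiv. apply Rmult_le_compat_l; auto. apply Rinv_le_contravar; lra.
    + replace (Q * (V0 + exp 1 + 2) / c1 * (C_R k0 RR * INR K) ^ K)
        with ((Q / 4 * (V0 + exp 1 + 2) * (C_R k0 RR * INR K) ^ K) * / (c1/4)) by (field; lra).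
      unfold Rdiv at 1. apply Rmult_le_compat_r; [left; apply Rinv_0_lt_compat; lra | lra].
Qed.
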